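(* Let $d, r$ be positive integers with $r \geq 2$ and such that $m := r \log r$ is a positive integer, and let $B > 0$, $\epsilon > 0$, $0 < \delta < 1$. Let $\eta$ be an $m \times (d+1)$ random matrix whose rows $\eta_1, \ldots, \eta_m$ are independent, each with independent coordinates distributed as $\mathcal{N}\!\left(0, \frac{8B^2 \ln(1.25/\delta)}{\epsilon^2}\right)$. Fix $\beta \in \mathbb{R}^d$ and let $\beta_{-1} = \begin{bmatrix} \beta \\ -1 \end{bmatrix} \in \mathbb{R}^{d+1}$. Then there is an absolute constant $c > 0$ (independent of $d, r, B, \epsilon, \delta, \beta$) such that, with probability at least $c$, $$\|\eta \beta_{-1}\|_1 \leq \frac{2B\, r \log r \sqrt{2 \ln(1.25/\delta)}}{\epsilon}\, \|\beta_{-1}\|_1 .$$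
   Context: This bound is used in the paper for the regularization term arising when a sketch $S\hat{A}$ of the noise-augmented matrix $\hat{A} = \begin{bmatrix} A \\ \eta \end{bmatrix}$ is released for private $\ell_1$ regression, where $A \in \mathbb{R}^{n \times (d+1)}$ is a data matrix with rows of $\ell_2$ norm at most $B$ and $S \in \{0,1\}^{r \times (n + r\log r)}$ has a single $1$ in each column. ''With constant probability'' in the paper is interpreted as ''with probability at least some absolute positive constant''. *)

(* Defs.v *)
From HB Require Import structures.
From mathcomp Require Import all_boot all_order all_algebra.
From mathcomp Require Import all_classical all_reals all_analysis.
Set Implicit Arguments. Unset Strict Implicit. Unset Printing Implicit Defensive.
Import Order.TTheory GRing.Theory Num.Theory.
Local Open Scope classical_set_scope.
Local Open Scope ring_scope.

Definition mutually_independent {R : realType} {d : measure_display}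
  {T : measurableType d} (P : probability T R) (I : finType)
  (X : I -> T -> R) : Prop :=
  forall (J : {set I}) (A : I -> set R),
    (forall i, measurable (A i)) ->
    P (\bigcap_(i in [set` J]) (X i @^-1` A i)) =
    (\prod_(i in J) P (X i @^-1` A i))%E.

(* X has law N(mu, s^2) (s = standard deviation). *)
Definition has_normal_law {R : realType} {d : measure_display}
  {T : measurableType d} (P : probability T R) (X : T -> R) (mu s : R) : Prop :=
  forall A : set R, measurable A -> P (X @^-1` A) = normal_prob mu s A.

Definition l1norm {R : realType} (m n : nat) (M : 'M[R]_(m, n)) : R :=
  \sum_(i < m) \sum_(j < n) `|M i j|.

Definition beta_ext {R : realType} (d : nat) (beta : 'cV[R]_d) : 'cV[R]_(d + 1) :=
  col_mx beta (const_mx (-1)).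

(* Main.v *)
Require Import Defs.
From HB Require Import structures.
From mathcomp Require Import all_boot all_order all_algebra.
From mathcomp Require Import all_classical all_reals all_analysis.
From mathcomp Require Import measurable_realfun ring lra.
Import Order.TTheory GRing.Theory Num.Theory.
Local Open Scope classical_set_scope.
Local Open Scope ring_scope.

Module Helpers.
Import numFieldNormedType.Exports.
Section S.
Context {R : realType}.
Notation mu := (@lebesgue_measure R).

Lemma pi_gt2 : 2 < (pi : R).
Proof.
rewrite lt_neqAle pi_ge2 andbT; apply/eqP => h.
have h1 : (1 : R) = pi / 2 by rewrite -h divff.
by have := @cos1_gt0 R; rewrite h1 cos_pihalf ltxx.
Qed.

Lemma cvg_expR_sq (c : R) : 0 < c -> expR (- (x ^+ 2) / c) @[x --> +oo] --> 0.
Proof.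
move=> c0.
apply/cvgrPdist_le => e e0; near=> x.
rewrite sub0r normrN ger0_norm; last exact: expR_ge0.
rewrite mulNr expRN -[leRHS]invrK lef_pV2 ?posrE ?expR_gt0 ?invr_gt0//.
rewrite (le_trans _ (expR_ge1Dx _))//.
have x1 : 1 <= x by near: x; apply: nbhs_pinfty_ge; exact: num_real.
have xc : c / e <= x by near: x; apply: nbhs_pinfty_ge; exact: num_real.
have h1 : e^-1 <= x / c.
  by rewrite ler_pdivlMr // mulrC -ler_pdivlMr // mulrC.
have h2 : x / c <= x ^+ 2 / c.
  by rewrite ler_pM2r ?invr_gt0// expr2 ler_peMl// (le_trans ler01).
have h3 : 0 <= x ^+ 2 / c by rewrite divr_ge0 ?sqr_ge0 ?ltW.
lra.
Unshelve. all: end_near. Qed.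

Lemma dg (c x : R) : is_derive x (1:R) (fun y : R => - y ^+ 2 / c) (- (x *+ 2) / c).
Proof.
have H1 := is_deriveX 2 (@is_derive_id _ R x 1).
have H2 := is_deriveZ (- c^-1) H1.
have -> : (fun y : R => - y ^+ 2 / c) = (- c^-1) \*: ((@id R) ^+ 2).
  by apply/funext => y /=; rewrite /GRing.scale /= exprfctE /= mulrC mulrN mulNr.
apply: is_derive_eq H2 _.
rewrite /GRing.scale /= mulr1 expr1 mulrC mulr_natl mulrN mulNr.
done.
Qed.

Lemma dF (c K x : R) : is_derive x (1:R) (fun y : R => K * expR (- y ^+ 2 / c))
   (K * (expR (- x ^+ 2 / c) * (- (x *+ 2) / c))).
Proof.
have H := is_derive1_comp (is_derive_expR _) (dg c x).
have H2 := is_deriveZ K H.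
exact: H2.
Qed.

Lemma normal_pdf0E (s x : R) : s != 0 ->
  normal_pdf 0 s x = normal_peak s * expR (- x ^+ 2 / (s ^+ 2 *+ 2)).
Proof. by move=> s0; rewrite /normal_pdf (negbTE s0) /normal_fun subr0. Qed.

Lemma abs_moment (s : R) : 0 < s ->
  (\int[mu]_x (`|x| * normal_pdf 0 s x)%:E = (s ^+ 2 * normal_peak s *+ 2)%:E)%E.
Proof.
move=> s0; have s0' : s != 0 by rewrite gt_eqF.
set c := s ^+ 2 *+ 2.
have c0 : 0 < c by rewrite pmulrn_lgt0// exprn_gt0.
set k := normal_peak s.
have cf : continuous (fun x : R => `|x| * normal_pdf 0 s x).
  move=> x; apply: cvgM; first exact: norm_continuous.
  exact: continuous_normal_pdf.
rewrite ge0_symfun_integralT; last 3 first.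
- by move=> x; rewrite mulr_ge0// normal_pdf_ge0.
- exact: cf.
- by move=> x /=; rewrite normrN !normal_pdf0E// sqrrN.
rewrite -set_itvcy.
pose F (x : R) : R := - (s ^+ 2 * k) * expR (- x ^+ 2 / c).
have dFx (x : R) : is_derive x (1:R) F (x * (k * expR (- x ^+ 2 / c))).
  have H := dF c (- (s ^+ 2 * k)) x; apply: is_derive_eq H _.
  by rewrite /c; field.
rewrite (@ge0_continuous_FTC2y _ (fun x => `|x| * normal_pdf 0 s x) F 0 0).
- rewrite /F expr0n /= oppr0 mul0r expR0 mulr1 add0e opprK -EFinM.
  by congr (_%:E); rewrite mulr_natl.
- by move=> x x0; rewrite mulr_ge0// normal_pdf_ge0.
- exact: continuous_subspaceT.
- rewrite /F -[X in _ --> X](mulr0 (- (s ^+ 2 * k))).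
  apply: cvgM; first exact: cvg_cst.
  exact: cvg_expR_sq.
- by move=> x _; apply: ex_derive; exact: dFx.
- apply: cvg_at_right_filter; apply: differentiable_continuous.
  by apply/derivable1_diffP; apply: ex_derive; exact: dFx.
- move=> x; rewrite in_itv /= andbT => x0.
  rewrite derive1E; case: (dFx x) => _ ->.
  rewrite ger0_norm ?ltW// normal_pdf0E//.
Qed.

Lemma normal_density (s : R) (g : R -> \bar R) : (forall x, 0 <= g x)%E ->
  measurable_fun [set: R] g ->
  (\int[normal_prob 0 s]_x g x = \int[mu]_x (g x * (normal_pdf 0 s x)%:E))%E.
Proof.
move=> g0 mg.
have numu := @normal_prob_dominates R 0 s.
rewrite -(Radon_Nikodym_SigmaFinite.change_of_variables numu g0 measurableT mg).
apply: ae_eq_integral => //.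
- apply: emeasurable_funM => //.
  exact: measurable_int (Radon_Nikodym_SigmaFinite.f_integrable numu).
- apply: emeasurable_funM => //; apply/measurable_EFinP.
  exact: measurable_normal_pdf.
- apply: ae_eqe_mul2l.
  apply: integral_ae_eq => //.
  + exact: Radon_Nikodym_SigmaFinite.f_integrable numu.
  + apply/measurable_EFinP; exact: measurable_normal_pdf.
  + move=> E _ mE.
    by rewrite -Radon_Nikodym_SigmaFinite.f_integral.
Qed.

Lemma abs_expect (dT : measure_display) (T : measurableType dT) (P : probability T R)
  (X : T -> R) (s : R) : 0 < s -> measurable_fun setT X ->
  (forall A : set R, measurable A -> P (X @^-1` A) = normal_prob 0 s A) ->
  (\int[P]_t (`|X t|)%:E = (s ^+ 2 * normal_peak s *+ 2)%:E)%E.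
Proof.
move=> s0 mX law.
have mabs : measurable_fun [set: measurableTypeR R] (fun y : R => (`|y|)%:E).
  by apply/measurable_EFinP; exact: normr_measurable.
have mX' : measurable_fun [set: T] (X : T -> measurableTypeR R) by exact: mX.
have := @ge0_integral_pushforward _ _ T (measurableTypeR R) R X mX' P setT
  (fun y => (`|y|)%:E) measurableT mabs (fun y _ => normr_ge0 y).
rewrite preimage_setT => <-.
transitivity (\int[normal_prob 0 s]_y (`|y|)%:E)%E.
  by apply: eq_measure_integral => A mA _; rewrite /pushforward; apply: law.
rewrite normal_density//.
rewrite -abs_moment//.
Qed.
End S.
End Helpers.
Import Helpers.

Theorem lemma2 (R : realType) :
  exists c : R, 0 < c /\
  forall (d r m : nat) (b B eps delta : R),
    (0 < d)%N -> (2 <= r)%N -> (0 < m)%N ->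
    1 < b -> m%:R = r%:R * (ln r%:R / ln b) ->
    0 < B -> 0 < eps -> 0 < delta -> delta < 1 ->
    forall (dT : measure_display) (T : measurableType dT) (P : probability T R)
      (eta : T -> 'M[R]_(m, d + 1)),
      (forall i j, measurable_fun setT (fun t => eta t i j)) ->
      mutually_independent P (fun ij : 'I_m * 'I_(d + 1) => fun t => eta t ij.1 ij.2) ->
      (forall i j, has_normal_law P (fun t => eta t i j) 0
         (Num.sqrt (8 * B ^+ 2 * ln (5 / 4 / delta) / eps ^+ 2))) ->
      forall beta : 'cV[R]_d,
        (c%:E <= P [set t | (l1norm (eta t *m beta_ext beta) <=
            2 * B * (r%:R * (ln r%:R / ln b)) * Num.sqrt (2 * ln (5 / 4 / delta)) / eps
              * l1norm (beta_ext beta))%R])%E.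
Proof.
pose kap : R := 2 / Num.sqrt (pi *+ 2).
have pi2 : 0 < (pi : R) *+ 2 by rewrite pmulrn_lgt0 // pi_gt0.
have kap1 : kap < 1.
  rewrite /kap ltr_pdivrMr ?sqrtr_gt0 // mul1r.
  have -> : (2 : R) = Num.sqrt (2 ^+ 2) by rewrite sqrtr_sqr ger0_norm.
  rewrite ltr_sqrt //.
  by have := @pi_gt2 R; rewrite expr2 -mulr_natr; lra.
exists (1 - kap); split; first by rewrite subr_gt0.
move=> d r m b B eps delta d0 r2 m0 b1 hm B0 e0 dl0 dl1 dT T P eta meta _ law beta.
rewrite -hm.
set L := ln (5 / 4 / delta).
have L0 : 0 < L.
  apply: ln_gt0; rewrite ltr_pdivlMr // mul1r (lt_trans dl1) //.
  by rewrite ltr_pdivlMr // mul1r ltr_nat.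
set s := Num.sqrt (8 * B ^+ 2 * L / eps ^+ 2).
have hs : 2 * B * Num.sqrt (2 * L) / eps = s.
  rewrite /s (_ : 8 * B ^+ 2 * L / eps ^+ 2 = (2 * B / eps) ^+ 2 * (2 * L)); last first.
    by field; rewrite gt_eqF.
  rewrite [in RHS]sqrtrM ?sqr_ge0 // sqrtr_sqr ger0_norm; last by rewrite divr_ge0 ?mulr_ge0 ?ltW.
  by rewrite mulrAC.
have s0 : 0 < s by rewrite -hs divr_gt0 // mulr_gt0 ?mulr_gt0 // sqrtr_gt0 mulr_gt0.
set be := beta_ext beta.
set N := l1norm be.
have NE : N = \sum_(j < d + 1) `|be j 0|.
  by rewrite /N /l1norm; apply: eq_bigr => j _; rewrite big_ord1.
have N1 : 1 <= N.
  rewrite NE (bigD1 (rshift d (0 : 'I_1))) //= /be /beta_ext col_mxEd mxE normrN normr1.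
  by rewrite lerDl sumr_ge0.
set a := m%:R * s * N.
have -> : 2 * B * m%:R * Num.sqrt (2 * L) / eps * N = a.
  by rewrite /a -hs; ring.
have a0 : 0 < a by rewrite /a mulr_gt0 ?mulr_gt0 ?ltr0n // (lt_le_trans ltr01).
pose Y t := \sum_(i < m) \sum_(j < d + 1) `|eta t i j| * `|be j 0|.
have mabs i j : measurable_fun setT (fun t => `|eta t i j|).
  by apply: measurableT_comp; [exact: normr_measurable | exact: meta].
have mY : measurable_fun setT Y.
  apply: measurable_sum => i; apply: measurable_sum => j.
  by apply: measurable_funM => //; exact: mabs.
have Y0 t : 0 <= Y t by rewrite sumr_ge0 // => i _; rewrite sumr_ge0 // => j _; rewrite mulr_ge0.
have hle t : l1norm (eta t *m be) <= Y t.
  rewrite /l1norm /Y; apply: ler_sum => i _; rewrite big_ord1 mxE.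
  by apply: (le_trans (ler_norm_sum _ _ _)); apply: ler_sum => j _; rewrite normrM.
have K0 : s ^+ 2 * normal_peak s *+ 2 = kap * s.
  rewrite /normal_peak -[s ^+ 2 * pi *+ 2]mulrnAr sqrtrM ?sqr_ge0 // sqrtr_sqr ger0_norm ?ltW //.
  rewrite /kap; field.
  by rewrite gt_eqF ?sqrtr_gt0 // gt_eqF.
have EY : (\int[P]_t (Y t)%:E = (kap * a)%:E)%E.
  transitivity (\int[P]_t (\sum_(i < m) \sum_(j < d + 1)
      ((`|be j 0|)%:E * (`|eta t i j|)%:E)))%E.
    apply: eq_integral => t _; rewrite /Y -sumEFin; apply: eq_bigr => i _.
    by rewrite -sumEFin; apply: eq_bigr => j _; rewrite -EFinM mulrC.
  rewrite ge0_integral_sum //; last 2 first.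
  - move=> i; apply: emeasurable_sum => j.
    by apply: emeasurable_funM => //; apply/measurable_EFinP; exact: mabs.
  - by move=> i t _; rewrite sume_ge0 // => j _; rewrite mule_ge0.
  transitivity (\sum_(i < m) \sum_(j < d + 1)
      ((`|be j 0|)%:E * (s ^+ 2 * normal_peak s *+ 2)%:E))%E.
    apply: eq_bigr => i _; rewrite ge0_integral_sum //; last first.
      by move=> j; apply: emeasurable_funM => //; apply/measurable_EFinP; exact: mabs.
    apply: eq_bigr => j _; rewrite ge0_integralZl_EFin //; last first.
      by apply/measurable_EFinP; exact: mabs.
    by rewrite (@abs_expect R _ _ P _ s s0 (meta i j) (law i j)).
  rewrite K0; under eq_bigr do rewrite sumEFin.
  rewrite sumEFin; congr (_%:E).
  rewrite /a NE.
  under eq_bigr do rewrite -mulr_suml.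
  rewrite sumr_const card_ord; ring.
pose A := [set t | a <= Y t].
have mA : measurable A.
  rewrite (_ : A = setT `&` Y @^-1` `[a, +oo[); first exact: mY.
  by rewrite setTI /A; apply/seteqP; split => t /=; rewrite in_itv /= andbT.
have mf : measurable_fun setT (fun t => l1norm (eta t *m be)).
  rewrite /l1norm; apply: measurable_sum => i; apply: measurable_sum => j.
  apply: measurableT_comp; first exact: normr_measurable.
  rewrite (_ : (fun t => (eta t *m be) i j) = fun t => \sum_k eta t i k * be k j); last first.
    by apply/funext => t; rewrite mxE.
  by apply: measurable_sum => k; apply: measurable_funM.
have mB : measurable [set t | l1norm (eta t *m be) <= a].
  rewrite (_ : [set t | _] = setT `&` (fun t => l1norm (eta t *m be)) @^-1` `]-oo, a]); first exact: mf.
  by rewrite setTI; apply/seteqP; split => t /=; rewrite in_itv /=.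
have markov : (a%:E * P A <= (kap * a)%:E)%E.
  have mid : measurable_fun [set: \bar R] (fun x : \bar R => x) by [].
  have h := @le_integral_comp_abse _ T R P setT measurableT (fun t => (Y t)%:E) a (fun x => x)
    mid (fun r r0 => r0) (fun x y _ _ xy => xy).
  have mYE : measurable_fun setT (fun t => (Y t)%:E) by apply/measurable_EFinP.
  move: (h mYE a0); rewrite setTI (_ : [set x | _] = A); last first.
    by apply/seteqP; split => t /=; rewrite ger0_norm ?lee_fin.
  move=> H; rewrite -EY; apply: (le_trans H).
  rewrite le_eqVlt; apply/orP; left; apply/eqP; apply: eq_integral => t _ /=.
  by rewrite ger0_norm.
have PA : (P A <= kap%:E)%E.
  by rewrite -(@lee_pmul2l _ a%:E) // -EFinM mulrC.
apply: (@le_trans _ _ (P (~` A))).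
  by rewrite probability_setC // EFinB; apply: leeB.
apply: le_measure; rewrite ?inE //; first exact: measurableC.
move=> t /= /negP; rewrite -ltNge => Ya.
exact: (le_trans (hle t) (ltW Ya)).
Qed.
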